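(* Fix $n\ge 1$, the shape $\lambda=n^2=(n,n)$, and a density $\rho$ with positive entries $\rho_{1,j}=a_j$, $\rho_{2,j}=b_j$ for $1\le j\le n$; let $a=\sum_j a_j$, $b=\sum_j b_j$. Let $P_{\max}=E^{a_1}N^{b_1}E^{a_2}N^{b_2}\cdots E^{a_n}N^{b_n}\in\mathcal{P}$ and $I=\{P\in\mathcal{P}: P\le P_{\max}\}$. Then $\psi_\rho$ is injective with image exactly $I$; in particular $\psi_\rho$ is a bijection between $\mathrm{SVT}(\lambda,\rho)$ and $I$.
   Context: A density on a shape $\lambda$ is an assignment of a nonnegative integer $\rho_{i,j}$ to every cell $(i,j)$ (row $i$, column $j$); let $N=\sum\rho_{i,j}$. A standard set-valued Young tableau of shape $\lambda$ and density $\rho$ assigns to each cell $(i,j)$ a set $S_{i,j}$ with $|S_{i,j}|=\rho_{i,j}$, the sets partitioning $[N]$, such that every element of $S_{i,j}$ is smaller than every element of $S_{i,j+1}$ and of $S_{i+1,j}$ whenever those cells exist. $\mathrm{SVT}(\lambda,\rho)$ is the set of these tableaux. $\mathcal{P}$ is the set of lattice paths from $(0,0)$ to $(a,b)$ using steps $E=(1,0)$ and $N=(0,1)$, written as words in $E,N$. The map $\psi_\rho:\mathrm{SVT}(\lambda,\rho)\to\mathcal{P}$ sends $T$ to the word whose $m$-th letter ($1\le m\le a+b$) is $E$ if $m$ lies in the first row of $T$ and $N$ if $m$ lies in the second row. For $P_1,P_2\in\mathcal{P}$, $P_1\ge P_2$ (equivalently $P_2\le P_1$) means $P_1$ lies weakly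 above $P_2$ over $0\le x\le a$. *)

(* Defs.v *)
From mathcomp Require Import all_boot.
Set Implicit Arguments. Unset Strict Implicit. Unset Printing Implicit Defensive.

Section SVT.
Variables (n : nat) (a b : 'I_n -> nat).

Definition suma : nat := \sum_(j < n) a j.
Definition sumb : nat := \sum_(j < n) b j.
Definition totN : nat := suma + sumb.

(* Cells are pairs (i, j) with i : 'I_2 (row 0 = first row, row 1 = second
   row) and j : 'I_n (column). The density: rho_{1,j} = a_j, rho_{2,j} = b_j. *)
Definition dens (c : 'I_2 * 'I_n) : nat :=
  if c.1 == ord0 then a c.2 else b c.2.

(* The ground set [N] = {1,...,N} is represented by 'I_N = {0,...,N-1},
   element m : 'I_N standing for m+1 (order preserving). *)
Definition tableau := {ffun 'I_2 * 'I_n -> {set 'I_totN}}.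

Definition is_SVT (T : tableau) : Prop :=
  [/\ (forall c, #|T c| = dens c),
      (forall m : 'I_totN, exists c, m \in T c),
      (forall c c', c <> c' -> [disjoint T c & T c']),
      (forall (i : 'I_2) (j j' : 'I_n), val j' = (val j).+1 ->
         forall x y, x \in T (i, j) -> y \in T (i, j') -> x < y)
    &
      (forall (j : 'I_n) x y, x \in T (ord0, j) -> y \in T (ord_max, j) -> x < y)].

(* Lattice paths as words: true = E = (1,0), false = N = (0,1). *)
Definition psi (T : tableau) : seq bool :=
  [seq [exists j, m \in T (ord0, j)] | m <- enum 'I_totN].

Definition Pmax : seq bool :=
  flatten [seq nseq (a j) true ++ nseq (b j) false | j <- enum 'I_n].

End SVT.

Definition lattice_path (x y : nat) (P : seq bool) : Prop :=
  size P = x + y /\ count id P = x.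

Definition path_pt (P : seq bool) (k : nat) : nat * nat :=
  (count id (take k P), count negb (take k P)).

Definition on_path (P : seq bool) (p : nat * nat) : Prop :=
  exists2 k, k <= size P & path_pt P k = p.

(* lpath_le P2 P1 : P1 lies weakly above P2, i.e. for every abscissa x, every
   point of P2 on the vertical line x lies weakly below some point of P1 on
   that line. *)
Definition lpath_le (P2 P1 : seq bool) : Prop :=
  forall x y2, on_path P2 (x, y2) -> exists2 y1, on_path P1 (x, y1) & y2 <= y1.

(* Main.v *)
Require Import Defs.
From mathcomp Require Import all_boot zify.
Set Implicit Arguments. Unset Strict Implicit. Unset Printing Implicit Defensive.

Lemma count_take_sum (w : seq bool) (p : pred bool) k :
  count p (take k w) = \sum_(i < size w | i < k) p (nth false w i).
Proof.
elim: w k => [|x w IH] k /=; first by rewrite big_ord0.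
rewrite big_mkcond big_ord_recl /=; case: k => [|k] /=.
  by rewrite big1 //.
by rewrite IH big_mkcond.
Qed.

Lemma count_take_sumN N (w : seq bool) (p : pred bool) k :
  size w = N ->
  count p (take k w) = \sum_(i < N | i < k) p (nth false w i).
Proof. by move=> <-; apply: count_take_sum. Qed.

Lemma sumn_take_sum (s : seq nat) k :
  sumn (take k s) = \sum_(i < size s | i < k) nth 0 s i.
Proof.
elim: s k => [|x s IH] k /=; first by rewrite big_ord0.
rewrite big_mkcond big_ord_recl /=; case: k => [|k] /=.
  by rewrite big1 //.
by rewrite IH big_mkcond.
Qed.

Lemma count_take_le (p : pred bool) (w : seq bool) k : count p (take k w) <= count p w.
Proof. by rewrite -{2}(cat_take_drop k w) count_cat leq_addr. Qed.

Lemma count_take_mono (p : pred bool) (w : seq bool) k k' : k <= k' ->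
  count p (take k w) <= count p (take k' w).
Proof. by move=> H; rewrite -(take_takel w H) count_take_le. Qed.

Lemma count_take_S (p : pred bool) (w : seq bool) k : k < size w ->
  count p (take k.+1 w) = count p (take k w) + p (nth false w k).
Proof. by move=> H; rewrite (take_nth false H) -cats1 count_cat /= addn0. Qed.

Definition pm (l : seq (nat * nat)) : seq bool :=
  flatten [seq nseq p.1 true ++ nseq p.2 false | p <- l].

Lemma pm_cons p q l : pm ((p, q) :: l) = nseq p true ++ nseq q false ++ pm l.
Proof. by rewrite /pm /= catA. Qed.

Lemma count_nseqT p : count id (nseq p true) = p.
Proof. by rewrite count_nseq /= mul1n. Qed.
Lemma count_nseqF p : count id (nseq p false) = 0.
Proof. by rewrite count_nseq. Qed.
Lemma countN_nseqT p : count negb (nseq p true) = 0.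
Proof. by rewrite count_nseq. Qed.
Lemma countN_nseqF p : count negb (nseq p false) = p.
Proof. by rewrite count_nseq /= mul1n. Qed.

Lemma take_pm_1 p q l k : k <= p -> take k (pm ((p, q) :: l)) = nseq k true.
Proof.
move=> H; rewrite pm_cons take_cat size_nseq.
case: ltnP => H2; first by rewrite take_nseq // ltnW.
have -> : k = p by apply/eqP; rewrite eqn_leq H H2.
by rewrite subnn take0 cats0.
Qed.

Lemma take_pm_2 p q l k : p <= k <= p + q ->
  take k (pm ((p, q) :: l)) = nseq p true ++ nseq (k - p) false.
Proof.
move=> /andP [H1 H2]; rewrite pm_cons catA take_cat size_cat !size_nseq.
case: ltnP => H3.
  rewrite take_cat size_nseq ltnNge H1 /= take_nseq //.
  by rewrite leq_subLR.
have -> : k = p + q by apply/eqP; rewrite eqn_leq H2 H3.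
by rewrite subnn take0 cats0 addKn.
Qed.

Lemma take_pm_3 p q l k : p + q <= k ->
  take k (pm ((p, q) :: l)) = nseq p true ++ nseq q false ++ take (k - (p + q)) (pm l).
Proof.
move=> H; rewrite pm_cons catA take_cat size_cat !size_nseq ltnNge H /=.
by rewrite catA.
Qed.

Lemma pm_C l k t : t < size l ->
  count id (take k (pm l)) < sumn (take t.+1 (map fst l)) ->
  count negb (take k (pm l)) <= sumn (take t (map snd l)).
Proof.
elim: l k t => [|[p q] l IH] k t //.
move=> Ht.
case: (leqP k p) => Hkp.
  by rewrite take_pm_1 // countN_nseqT.
case: (leqP k (p + q)) => Hkq.
  rewrite take_pm_2; last by rewrite ltnW.
  rewrite !count_cat count_nseqT countN_nseqT count_nseqF countN_nseqF.
  case: t Ht => [|t] Ht /=; first by rewrite take0 /= addn0 ltnn.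
  move=> _; rewrite add0n; apply: leq_trans (leq_addr _ _); rewrite leq_subLR //.
rewrite take_pm_3; last by rewrite ltnW.
rewrite !count_cat count_nseqT countN_nseqT count_nseqF countN_nseqF /=.
case: t Ht => [|t] Ht /=; first by rewrite take0 /= addn0 ltnNge leq_addr.
rewrite ltn_add2l add0n -plusE leq_add2l; exact: IH.
Qed.

Lemma pm_pt l t x : t < size l ->
  sumn (take t (map fst l)) <= x <= sumn (take t.+1 (map fst l)) ->
  on_path (pm l) (x, sumn (take t (map snd l))).
Proof.
elim: l t x => [|[p q] l IH] t x //.
case: t => [|t] /=.
  move=> _; rewrite take0 addn0 => Hx.
  exists x; first by rewrite pm_cons !size_cat size_nseq; apply: leq_trans Hx (leq_addr _ _).
  by rewrite /path_pt take_pm_1 // count_nseqT countN_nseqT.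
rewrite ltnS => Ht /andP [Hx1 Hx2].
have Hpx : p <= x by apply: leq_trans Hx1; apply: leq_addr.
have [k Hk Hpt] : on_path (pm l) (x - p, sumn (take t (map snd l))).
  apply: IH => //; rewrite leq_subRL // Hx1 /= leq_subLR //.
exists (p + q + k).
  by rewrite pm_cons !size_cat !size_nseq addnA leq_add2l.
move: Hpt; rewrite /path_pt take_pm_3 ?leq_addr // addKn.
rewrite !count_cat count_nseqT countN_nseqT count_nseqF countN_nseqF /=.
by case=> -> ->; rewrite subnKC.
Qed.

Lemma pm_count l : count id (pm l) = sumn (map fst l) /\ count negb (pm l) = sumn (map snd l).
Proof.
elim: l => [|[p q] l [IH1 IH2]] //=.
by rewrite pm_cons !count_cat count_nseqT countN_nseqT count_nseqF countN_nseqF IH1 IH2.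
Qed.

Lemma sumn_take_sumN N (s : seq nat) (F : 'I_N -> nat) k :
  size s = N -> (forall i : 'I_N, nth 0 s i = F i) ->
  sumn (take k s) = \sum_(i < N | i < k) F i.
Proof. by move=> E H; subst N; rewrite sumn_take_sum; apply: eq_bigr => i _; rewrite H. Qed.

Lemma card_set_sum N (Q : pred 'I_N) : #|[set x | Q x]| = \sum_(x < N) (Q x : nat).
Proof. by rewrite -sum1_card big_mkcond; apply: eq_bigr => x _; rewrite inE; case: (Q x). Qed.

Section Main.
Variables (n : nat) (a b : 'I_n -> nat).
Hypotheses (Ha : forall j, 0 < a j) (Hb : forall j, 0 < b j).
Local Notation N := (totN a b).
Local Notation tab := (tableau a b).
Local Notation dens := (dens a b).

Definition bit (i : 'I_2) := i == ord0.
Lemma bit0 : bit ord0 = true. Proof. by []. Qed.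
Lemma bit1 : bit ord_max = false. Proof. by []. Qed.
Lemma bit_inj i i' : bit i = bit i' -> i = i'.
Proof. by move: i i' => [[|[|//]] ?] [[|[|//]] ?] // _; apply/val_inj. Qed.

Lemma dens0 j : dens (ord0, j) = a j. Proof. by []. Qed.
Lemma dens1 j : dens (ord_max, j) = b j. Proof. by []. Qed.
Lemma dens_pos c : 0 < dens c. Proof. by rewrite /Defs.dens; case: ifP. Qed.

Definition S (i : 'I_2) (t : nat) := \sum_(j < n | j < t) dens (i, j).

Lemma S_succ i (j : 'I_n) : S i j.+1 = S i j + dens (i, j).
Proof.
rewrite /S (bigD1 j) ?ltnSn //= addnC; congr (_ + _); apply: eq_bigl => j'.
by rewrite ltnS ltn_neqAle andbC.
Qed.

Lemma S_mono i t t' : t <= t' -> S i t <= S i t'.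
Proof.
move=> H; rewrite /S big_mkcond [X in _ <= X]big_mkcond; apply: leq_sum => j _.
by case: ifP => // H1; rewrite (leq_trans H1 H).
Qed.

Lemma S_0 i : S i 0 = 0.
Proof. by rewrite /S big_pred0. Qed.

Lemma S_n0 : S ord0 n = suma a.
Proof. by rewrite /S /suma; apply: eq_big => j; rewrite ?ltn_ord // dens0. Qed.
Lemma S_n1 : S ord_max n = sumb b.
Proof. by rewrite /S /sumb; apply: eq_big => j; rewrite ?ltn_ord // dens1. Qed.

Lemma S_uniq i (j j' : nat) r : S i j <= r < S i j.+1 -> S i j' <= r < S i j'.+1 -> j = j'.
Proof.
move=> /andP [H1 H2] /andP [H3 H4].
case: (ltngtP j j') => // H.
  have := S_mono i H; move=> H5; have := leq_trans H5 H3; by rewrite leqNgt H2.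
have := S_mono i H; move=> H5; have := leq_trans H5 H1; by rewrite leqNgt H4.
Qed.

Lemma S_find i t r : r < S i t -> exists2 j, j < t & S i j <= r < S i j.+1.
Proof.
elim: t => [|t IH]; first by rewrite S_0.
move=> H; case: (ltnP r (S i t)) => H2.
  by case: (IH H2) => j Hj Hr; exists j => //; rewrite ltnS ltnW.
by exists t => //; rewrite H2 H.
Qed.

Definition rowbit (T : tab) (m : 'I_N) := [exists j, m \in T (ord0, j)].

Lemma size_psi (T : tab) : size (psi T) = N.
Proof. by rewrite /psi size_map size_enum_ord. Qed.

Lemma nth_psi (T : tab) (m : 'I_N) : nth false (psi T) m = rowbit T m.
Proof. by rewrite /psi (nth_map m) ?size_enum_ord ?ltn_ord // nth_ord_enum. Qed.

Lemma cell_uniq (T : tab) c c' m : is_SVT T -> m \in T c -> m \in T c' -> c = c'.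
Proof.
case=> _ _ Hd _ _ H1 H2; case: (eqVneq c c') => // /eqP Hne.
by have := disjointFr (Hd _ _ Hne) H1; rewrite H2.
Qed.

Lemma rowbit_cell (T : tab) i j m : is_SVT T -> m \in T (i, j) -> rowbit T m = bit i.
Proof.
move=> HT Hm; rewrite /rowbit; case: (boolP (bit i)) => Hi.
  by move/eqP: Hi => Ei; subst i; apply/existsP; exists j.
apply/negbTE/negP => /existsP [j' Hj'].
by have [Ei _] := cell_uniq HT Hm Hj'; rewrite Ei in Hi.
Qed.

Lemma nonempty (T : tab) c : is_SVT T -> exists z, z \in T c.
Proof. by case=> Hc _ _ _ _; apply/card_gt0P; rewrite Hc dens_pos. Qed.

Lemma row_lt (T : tab) i (j j' : 'I_n) x y : is_SVT T -> j < j' ->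
  x \in T (i, j) -> y \in T (i, j') -> x < y.
Proof.
move=> HT; have HT' := HT; case: HT' => _ _ _ Hrow _.
suff: forall d (j j' : 'I_n) x y, val j' = j + d.+1 ->
  x \in T (i, j) -> y \in T (i, j') -> x < y.
  move=> H Hjj'; apply: (H (j' - j.+1)); rewrite addnS -addSn subnKC //.
elim=> [|d IH] {}j {}j' {}x {}y E Hx Hy.
  by apply: Hrow Hx Hy; rewrite E addn1.
have Hj1 : j.+1 < n. apply: leq_trans (ltn_ord j'); by rewrite E !addnS !ltnS; apply: leqW; apply: leq_addr.
have [z Hz] := nonempty (i, Ordinal Hj1) HT.
apply: (ltn_trans (Hrow _ _ _ _ _ _ Hx Hz)) => //.
by apply: (IH (Ordinal Hj1) j' z y) => //=; rewrite E addnS addSn.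
Qed.

Lemma col_lt (T : tab) (j j' : 'I_n) x y : is_SVT T -> j <= j' ->
  x \in T (ord0, j) -> y \in T (ord_max, j') -> x < y.
Proof.
move=> HT; have HT' := HT; case: HT' => _ _ _ _ Hcol.
rewrite leq_eqVlt => /orP [/eqP E|H] Hx Hy.
  by move: Hx; rewrite (ord_inj E) => Hx; apply: Hcol Hx Hy.
have [z Hz] := nonempty (ord0, j') HT.
exact: ltn_trans (row_lt HT H Hx Hz) (Hcol _ _ _ Hz Hy).
Qed.


Lemma nb0 (bb : bool) : ~~ bb -> (bb : nat) = 0. Proof. by case: bb. Qed.

Definition cellcnt (T : tab) c (k : nat) := \sum_(x : 'I_N | x < k) (x \in T c : nat).
Definition cnt (T : tab) i (k : nat) := \sum_(x : 'I_N | x < k) (rowbit T x == bit i : nat).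

Lemma hc_psi (T : tab) i k :
  count (fun z => z == bit i) (take k (psi T)) = cnt T i k.
Proof.
by rewrite (count_take_sumN _ _ (size_psi T)); apply: eq_bigr => x _; rewrite nth_psi.
Qed.

Lemma L1 (T : tab) i x : is_SVT T ->
  (rowbit T x == bit i : nat) = \sum_(j < n) (x \in T (i, j) : nat).
Proof.
move=> HT; have HT' := HT; case: HT' => _ Hcov _ _ _.
case: (Hcov x) => -[i0 j0] H0; rewrite (rowbit_cell HT H0).
case: (eqVneq i0 i) => [Ei|Hne].
  subst i0; rewrite eqxx (bigD1 j0) //= H0 big1 // => j Hj.
  apply: nb0; apply/negP => Hx; have := cell_uniq HT H0 Hx; case=> E.
  by rewrite E eqxx in Hj.
have -> : (bit i0 == bit i) = false.
  by apply/negbTE; apply: contra Hne => /eqP /bit_inj ->.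
rewrite big1 // => j _; apply: nb0; apply/negP => Hx.
by have := cell_uniq HT H0 Hx; case=> E _; rewrite E eqxx in Hne.
Qed.

Lemma cnt_cells (T : tab) i k : is_SVT T -> cnt T i k = \sum_(j < n) cellcnt T (i, j) k.
Proof.
move=> HT; rewrite /cnt /cellcnt (eq_bigr _ (fun x _ => L1 i x HT)).
exact: exchange_big.
Qed.

Lemma card_sum (T : tab) c : #|T c| = \sum_x (x \in T c : nat).
Proof. by rewrite -sum1_card big_mkcond; apply: eq_bigr => x _; case: (x \in T c). Qed.

Lemma cellcnt_le (T : tab) c k : is_SVT T -> cellcnt T c k <= dens c.
Proof.
case=> Hc _ _ _ _; rewrite -Hc card_sum (bigID (fun x : 'I_N => x < k)) /=.
exact: leq_addr.
Qed.

Lemma cellcnt_full (T : tab) c k : is_SVT T -> (forall x, x \in T c -> x < k) ->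
  cellcnt T c k = dens c.
Proof.
case=> Hc _ _ _ _ H; rewrite -Hc card_sum (bigID (fun x : 'I_N => x < k)) /=.
rewrite [X in _ = _ + X]big1 ?addn0 // => x Hx; apply: nb0; apply/negP => Hx'.
by have := H x Hx'; rewrite (negbTE Hx).
Qed.

Lemma cellcnt_zero (T : tab) c k : (forall x, x \in T c -> k <= x) -> cellcnt T c k = 0.
Proof.
move=> H; rewrite /cellcnt big1 // => x Hx; apply: nb0; apply/negP => Hx'.
by have := H x Hx'; rewrite leqNgt Hx.
Qed.

Lemma cellcnt_lt (T : tab) c (m : 'I_N) : is_SVT T -> m \in T c -> cellcnt T c m < dens c.
Proof.
case=> Hc _ _ _ _ Hm; rewrite -Hc card_sum (bigID (fun x : 'I_N => x < m)) /=.
rewrite -addn1 leq_add2l (bigD1 m) /= ?ltnn // Hm.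
exact: leq_addr.
Qed.

Lemma key (T : tab) i (j : 'I_n) (m : 'I_N) : is_SVT T -> m \in T (i, j) ->
  S i j <= cnt T i m < S i j.+1.
Proof.
move=> HT Hm; rewrite cnt_cells // S_succ (bigID (fun j' : 'I_n => j' < j)) /=.
have E1 : \sum_(j' < n | j' < j) cellcnt T (i, j') m = S i j.
  rewrite /S; apply: eq_bigr => j' Hj'; apply: cellcnt_full => // x Hx.
  exact: row_lt HT Hj' Hx Hm.
have E2 : \sum_(j' < n | ~~ (j' < j)) cellcnt T (i, j') m = cellcnt T (i, j) m.
  rewrite (bigD1 j) /= ?ltnn // big1 ?addn0 // => j' /andP [H1 H2].
  apply: cellcnt_zero => x Hx; apply: ltnW; apply: row_lt HT _ Hm Hx.
  by rewrite ltn_neqAle leqNgt H1 andbT eq_sym.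
by rewrite E1 E2 leq_addr /= ltn_add2l cellcnt_lt.
Qed.

Definition Cond (P : seq bool) := forall k j, j < n ->
  count id (take k P) < S ord0 j.+1 -> count negb (take k P) <= S ord_max j.

Lemma cnt0 (T : tab) k : count id (take k (psi T)) = cnt T ord0 k.
Proof. by rewrite -hc_psi; apply: eq_count => z; rewrite bit0 eqb_id. Qed.
Lemma cnt1 (T : tab) k : count negb (take k (psi T)) = cnt T ord_max k.
Proof. by rewrite -hc_psi; apply: eq_count => z; rewrite bit1 eqbF_neg. Qed.

Lemma Cond_psi (T : tab) : is_SVT T -> Cond (psi T).
Proof.
move=> HT k j Hj; rewrite cnt0 cnt1 => H0; rewrite leqNgt; apply/negP => H1.
move: H1; rewrite cnt_cells // (bigID (fun j' : 'I_n => j' < j)) /= => H1.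
have Hle : \sum_(j' < n | j' < j) cellcnt T (ord_max, j') k <= S ord_max j.
  by apply: leq_sum => j' _; apply: cellcnt_le.
have [j' Hj' Hc] : exists2 j' : 'I_n, ~~ (j' < j) & 0 < cellcnt T (ord_max, j') k.
  case: (pickP (fun j' : 'I_n => ~~ (j' < j) && (0 < cellcnt T (ord_max, j') k))).
    by move=> j' /andP [H2 H3]; exists j'.
  move=> Hn; move: H1; rewrite [X in _ < _ + X]big1 ?addn0; first by rewrite ltnNge Hle.
  move=> j'' Hj''; have := Hn j''; rewrite Hj'' /= lt0n => /negbFE /eqP //.
have [x /andP [Hxk Hx]] : exists x : 'I_N, (x < k) && (x \in T (ord_max, j')).
  case: (pickP (fun x : 'I_N => (x < k) && (x \in T (ord_max, j')))).
    by move=> x Hx; exists x.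
  move=> Hn; move: Hc; rewrite /cellcnt big1 // => x Hx; have := Hn x; rewrite Hx /=.
  by move=> ->.
have : S ord0 j.+1 <= cnt T ord0 k.
  rewrite cnt_cells // (bigID (fun j'' : 'I_n => j'' < j.+1)) /=.
  apply: leq_trans (leq_addr _ _); rewrite /S; apply: eq_leq; apply: eq_bigr => j'' Hj''.
  apply/esym/cellcnt_full => // y Hy; apply: (ltn_trans _ Hxk).
  apply: col_lt HT _ Hy Hx; apply: leq_trans (_ : j <= j'); first by rewrite -ltnS.
  by rewrite leqNgt.
by rewrite leqNgt H0.
Qed.

Lemma count_psi (T : tab) : is_SVT T -> count id (psi T) = suma a.
Proof.
move=> HT; rewrite -(take_oversize (leqnn (size (psi T)))) size_psi cnt0 cnt_cells //.
rewrite /suma; apply: eq_bigr => j _; rewrite -dens0; by apply: cellcnt_full => // x _.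
Qed.


Definition hc (P : seq bool) i (m : nat) := count (fun z => z == bit i) (take m P).

Definition build (P : seq bool) : tab :=
  [ffun c : 'I_2 * 'I_n => [set m : 'I_N | (nth false P m == bit c.1) &&
                             (S c.1 c.2 <= hc P c.1 m < S c.1 c.2.+1)]].

Lemma build_psi (T : tab) : is_SVT T -> build (psi T) = T.
Proof.
move=> HT; have HT' := HT; case: HT' => _ Hcov _ _ _.
apply/ffunP => -[i j]; apply/setP => m; rewrite ffunE inE /= nth_psi /hc hc_psi.
apply/idP/idP.
  case/andP => /eqP Hbi Hk; case: (Hcov m) => -[i0 j0] H0.
  rewrite (rowbit_cell HT H0) in Hbi; move/bit_inj: Hbi => Ei; subst i0.
  have Hk0 := key HT H0.
  by have Ej := S_uniq Hk0 Hk; rewrite (ord_inj Ej) in H0.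
by move=> Hm; rewrite (rowbit_cell HT Hm) eqxx key.
Qed.

Lemma hc0 P k : hc P ord0 k = count id (take k P).
Proof. by apply: eq_count => z; rewrite bit0 eqb_id. Qed.
Lemma hc1 P k : hc P ord_max k = count negb (take k P).
Proof. by apply: eq_count => z; rewrite bit1 eqbF_neg. Qed.

Lemma G_min (P : seq bool) bb t k : k <= size P ->
  \sum_(m < k) ((nth false P m == bb) && (count (fun z => z == bb) (take m P) < t) : nat)
  = minn t (count (fun z => z == bb) (take k P)).
Proof.
elim: k => [|k IH] Hk; first by rewrite big_ord0 take0 /= minn0.
rewrite big_ord_recr /=.
rewrite (IH (ltnW Hk)) (count_take_S _ Hk).
case: (nth false P k == bb) => /=; last by rewrite !addn0.
set c := count _ _.
case: (ltnP c t) => H /=.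
  by apply/esym/minn_idPr; rewrite addn1.
by rewrite addn0; apply/esym/minn_idPl; rewrite addn1 leqW.
Qed.


Section Build.
Variable P : seq bool.
Hypotheses (Hs : size P = N) (Hc : count id P = suma a) (HC : Cond P).

Lemma totP i : count (fun z => z == bit i) P = S i n.
Proof.
move: i => [[|[|//]] Hi].
  have -> : Ordinal Hi = ord0 by apply/val_inj.
  by rewrite S_n0 -Hc; apply: eq_count => z; rewrite bit0 eqb_id.
have -> : Ordinal Hi = ord_max by apply/val_inj.
rewrite S_n1 (eq_count (a2 := predC id)); last by move=> z; rewrite bit1 eqbF_neg.
have := count_predC id P; rewrite Hs Hc /totN => E.
by apply/eqP; rewrite -(eqn_add2l (suma a)) E.
Qed.

Lemma build_card c : #|build P c| = dens c.
Proof.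
case: c => i j; rewrite ffunE /= card_set_sum.
have Hle : S i j.+1 <= count (fun z => z == bit i) P.
  by rewrite totP; apply: S_mono; apply: ltn_ord.
have E2 := G_min (bit i) (S i j.+1) (leqnn (size P)).
have E1 := G_min (bit i) (S i j) (leqnn (size P)).
rewrite take_size Hs in E1 E2.
rewrite (minn_idPl Hle) in E2.
rewrite (minn_idPl (leq_trans (S_mono i (leqnSn j)) Hle)) in E1.
have Hsp : \sum_(m < N) ((nth false P m == bit i) && (count (fun z => z == bit i) (take m P) < S i j.+1) : nat)
   = \sum_(m < N) ((nth false P m == bit i) && (count (fun z => z == bit i) (take m P) < S i j) : nat)
   + \sum_(m < N) ((nth false P m == bit i) && (S i j <= hc P i m < S i j.+1) : nat).
  rewrite -big_split /=; apply: eq_bigr => m _.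
  rewrite /hc; case: (nth false P m == bit i) => //=.
  set h := count _ _.
  case: (ltnP h (S i j)) => H /=.
    by rewrite (leq_trans H (S_mono i (leqnSn j))).
  by rewrite add0n.
move: Hsp; rewrite E1 E2 S_succ => /eqP; rewrite eqn_add2l => /eqP <-.
by [].
Qed.

Lemma build_cover (m : 'I_N) : exists c, m \in build P c.
Proof.
pose i : 'I_2 := if nth false P m then ord0 else ord_max.
have Hbi : bit i = nth false P m by rewrite /i; case: (nth false P m).
have Hh : hc P i m < S i n.
  rewrite -totP /hc; apply: leq_trans (count_take_le _ _ m.+1).
  by rewrite count_take_S ?Hs ?ltn_ord // Hbi eqxx addn1.
have [j Hj Hr] := S_find Hh.
by exists (i, Ordinal Hj); rewrite ffunE inE /= Hbi eqxx Hr.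
Qed.

Lemma build_disj c c' : c <> c' -> [disjoint build P c & build P c'].
Proof.
move: c c' => [i j] [i' j'] Hne; rewrite disjoint_subset; apply/subsetP => m.
rewrite !ffunE !inE /= => /andP [/eqP E1 H1]; apply/negP => /andP [/eqP E2 H2].
have Ei : i = i' by apply: bit_inj; rewrite -E1 -E2.
subst i'; have Ej := S_uniq H1 H2.
by apply: Hne; rewrite (ord_inj Ej).
Qed.

Lemma build_row (i : 'I_2) (j j' : 'I_n) : val j' = (val j).+1 ->
  forall x y, x \in build P (i, j) -> y \in build P (i, j') -> x < y.
Proof.
move=> E x y; rewrite !ffunE !inE /= E => /andP [_ /andP [_ H1]] /andP [_ /andP [H2 _]].
rewrite ltnNge; apply/negP => Hyx.
have := count_take_mono (fun z => z == bit i) P Hyx; rewrite -/(hc P i y) -/(hc P i x).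
move=> H3; have := leq_trans H2 H3; by rewrite leqNgt H1.
Qed.

Lemma build_col (j : 'I_n) x y : x \in build P (ord0, j) -> y \in build P (ord_max, j) -> x < y.
Proof.
rewrite !ffunE !inE /= => /andP [/eqP Ex /andP [_ H1]] /andP [/eqP Ey /andP [H2 _]].
rewrite ltnNge; apply/negP => Hyx.
have Hyx' : y < x.
  rewrite ltn_neqAle Hyx andbT; apply/negP => /eqP E.
  by move: Ey; rewrite (ord_inj E) Ex.
have Hy : y < size P by rewrite Hs ltn_ord.
have := @HC y.+1 j (ltn_ord j).
rewrite -hc0 -hc1 /hc !count_take_S // Ey.
rewrite -/(hc P ord0 y) -/(hc P ord_max y) bit1 bit0 /= addn0 addn1.
move=> H; have : hc P ord0 y <= hc P ord0 x by apply: count_take_mono; apply: ltnW.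
move=> H3; have := H (leq_ltn_trans H3 H1); by rewrite ltnNge H2.
Qed.

Lemma build_SVT : is_SVT (build P).
Proof.
split.
- exact: build_card.
- exact: build_cover.
- exact: build_disj.
- exact: build_row.
- exact: build_col.
Qed.

Lemma psi_build : psi (build P) = P.
Proof.
have E : forall m : 'I_N, [exists j, m \in build P (ord0, j)] = nth false P m.
  move=> m; case: (boolP (nth false P m)) => Hm.
    have [[i j] Hij] := build_cover m.
    move: (Hij); rewrite ffunE inE /= => /andP [/eqP E _].
    have Ei : i = ord0 by apply: bit_inj; rewrite -E bit0.
    by subst i; apply/existsP; exists j.
  apply/negbTE/negP => /existsP [j]; rewrite ffunE inE /= => /andP [/eqP E _].
  by rewrite E in Hm.
rewrite /psi (eq_map E) -[RHS](mkseq_nth false) Hs /mkseq -val_enum_ord -map_comp.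
by [].
Qed.

End Build.

Definition lp := [seq (a j, b j) | j <- enum 'I_n].

Lemma Pmax_pm : Pmax a b = pm lp.
Proof. by rewrite /Pmax /pm /lp -map_comp. Qed.

Lemma size_lp : size lp = n. Proof. by rewrite size_map size_enum_ord. Qed.

Lemma lp_fst t : sumn (take t (map fst lp)) = S ord0 t.
Proof.
rewrite /lp -map_comp (sumn_take_sumN (F := fun j => dens (ord0, j))) //.
  by rewrite size_map size_enum_ord.
by move=> i; rewrite (nth_map i) ?size_enum_ord ?ltn_ord // nth_ord_enum.
Qed.

Lemma lp_snd t : sumn (take t (map snd lp)) = S ord_max t.
Proof.
rewrite /lp -map_comp (sumn_take_sumN (F := fun j => dens (ord_max, j))) //.
  by rewrite size_map size_enum_ord.
by move=> i; rewrite (nth_map i) ?size_enum_ord ?ltn_ord // nth_ord_enum.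
Qed.

Lemma C_of_le P : lpath_le P (Pmax a b) -> Cond P.
Proof.
move=> Hle k j Hj H0.
have [k' Hk' Ek] : exists2 k', k' <= size P & take k' P = take k P.
  case: (leqP k (size P)) => H; first by exists k.
  by exists (size P) => //; rewrite take_size take_oversize // ltnW.
have Hon : on_path P (count id (take k P), count negb (take k P)).
  by exists k' => //; rewrite /path_pt Ek.
have [y1 [k1 Hk1 Hpt] Hy] := Hle _ _ Hon.
move: Hpt; rewrite /path_pt Pmax_pm; case=> E1 E2.
apply: leq_trans Hy _; rewrite -E2 -lp_snd; apply: pm_C; first by rewrite size_lp.
by rewrite E1 lp_fst.
Qed.

Lemma le_of_C P : size P = N -> count id P = suma a -> Cond P -> lpath_le P (Pmax a b).
Proof.
move=> Hs Hc HC x y2 [k Hk]; rewrite /path_pt; case=> Ex Ey.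
have Hxa : x <= suma a by rewrite -Ex -Hc count_take_le.
case: (ltnP x (suma a)) => Hx.
  rewrite -S_n0 in Hx; have [t Ht /andP [Ht1 Ht2]] := S_find Hx.
  exists (S ord_max t); last by rewrite -Ey; apply: HC => //; rewrite Ex.
  rewrite Pmax_pm -lp_snd; apply: pm_pt; first by rewrite size_lp.
  by rewrite !lp_fst Ht1 ltnW.
have Exa : x = suma a by apply/eqP; rewrite eqn_leq Hxa Hx.
exists (sumb b).
  exists (size (Pmax a b)) => //; rewrite /path_pt take_size Pmax_pm.
  have [C1 C2] := pm_count lp.
  have F1 : sumn (map fst lp) = suma a by rewrite -S_n0 -lp_fst take_oversize // size_map size_lp.
  have F2 : sumn (map snd lp) = sumb b by rewrite -S_n1 -lp_snd take_oversize // size_map size_lp.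
  by rewrite C1 C2 Exa F1 F2.
rewrite -Ey; apply: leq_trans (count_take_le _ _ k) _.
have := count_predC id P; rewrite Hs Hc /totN => E.
rewrite (eq_count (a2 := predC id)) //.
by rewrite -(leq_add2l (suma a)) E.
Qed.

End Main.

Theorem theorem9 (n : nat) (a b : 'I_n -> nat) :
  0 < n -> (forall j, 0 < a j) -> (forall j, 0 < b j) ->
  (forall T1 T2 : tableau a b, is_SVT T1 -> is_SVT T2 -> psi T1 = psi T2 -> T1 = T2)
  /\ (forall P : seq bool,
        (exists T : tableau a b, is_SVT T /\ psi T = P) <->
        (lattice_path (suma a) (sumb b) P /\ lpath_le P (Pmax a b))).
Proof.
move=> _ Ha Hb; split.
  move=> T1 T2 H1 H2 E.
  by rewrite -(build_psi Ha Hb H1) -(build_psi Ha Hb H2) E.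
move=> P; split.
  move=> [T [HT <-]]; split.
    by split; [rewrite size_psi | rewrite count_psi].
  apply: le_of_C; [exact: size_psi | exact: count_psi | exact: Cond_psi].
move=> [[Hs Hc] Hle].
have HC := C_of_le Hle.
exists (build a b P); split; [exact: build_SVT | exact: psi_build].
Qed.
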